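(* Let $\Delta:M_n\to M_n$ be a weak-2-local derivation which is symmetric, i.e. $\Delta(a^* )^*=\Delta(a)$ for all $a\in M_n$. Let $p_1,\ldots,p_n$ be mutually orthogonal minimal projections in $M_n$ and $q=1-p_n$. If $\Delta(p_j)=0$ for every $j=1,\ldots,n$, then $q\Delta(qaq)p_n=0=p_n\Delta(qaq)q$ for every $a\in M_n$.
   Context: $M_n=M_n(\mathbb{C})$. A derivation on $M_n$ is a linear map $D$ with $D(ab)=D(a)b+aD(b)$. A (not necessarily linear) map $\Delta:M_n\to M_n$ is a weak-2-local derivation if for every $a,b\in M_n$ and every $\phi\in M_n^*$ there exists a derivation $D_{a,b,\phi}$ such that $\phi\Delta(a)=\phi D_{a,b,\phi}(a)$ and $\phi\Delta(b)=\phi D_{a,b,\phi}(b)$. *)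

(* Defs.v *)
From HB Require Import structures.
From mathcomp Require Import all_boot all_order all_algebra.
From mathcomp Require Import reals.
From mathcomp Require Import complex.
Set Implicit Arguments. Unset Strict Implicit. Unset Printing Implicit Defensive.
Import Order.TTheory GRing.Theory Num.Theory.
Local Open Scope ring_scope.

Section Defs.
Variable R : realType.
Local Notation C := (R[i]).
Variable k : nat.
Local Notation M := ('M[C]_k).

Definition adj (a : M) : M := (map_mx Num.conj a)^T.

Definition lin_functional (phi : M -> C) : Prop :=
  forall (c : C) (a b : M), phi (c *: a + b) = c * phi a + phi b.

Definition is_derivation (D : M -> M) : Prop :=
  (forall (c : C) (a b : M), D (c *: a + b) = c *: D a + D b) /\
  (forall a b : M, D (a * b) = D a * b + a * D b).

Definition weak_2_local_derivation (Delta : M -> M) : Prop :=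
  forall (a b : M) (phi : M -> C), lin_functional phi ->
    exists D : M -> M, is_derivation D /\
      phi (Delta a) = phi (D a) /\ phi (Delta b) = phi (D b).

Definition symmetric_map (Delta : M -> M) : Prop :=
  forall a : M, adj (Delta (adj a)) = Delta a.

Definition projection (p : M) : Prop := adj p = p /\ p * p = p.

Definition minimal_projection (p : M) : Prop :=
  projection p /\ p != 0 /\
  forall q : M, projection q -> q * p = q -> q = 0 \/ q = p.
End Defs.

(* Main.v *)
Require Import Defs.
From HB Require Import structures.
From mathcomp Require Import all_boot all_order all_algebra.
From mathcomp Require Import reals.
From mathcomp Require Import complex.
Import Order.TTheory GRing.Theory Num.Theory.
Local Open Scope ring_scope.

Lemma der_qP (T : pzRingType) (D : T -> T) (P b : T) :
  (forall a c, D (a * c) = D a * c + a * D c) -> P * P = P ->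
  (1 - P) * D ((1 - P) * b * (1 - P)) * P = ((1 - P) * b * (1 - P)) * D (1 - P) * P.
Proof.
move=> DM PP; set q := 1 - P.
have qP : q * P = 0 by rewrite /q mulrBl PP mul1r subrr.
have Pq : P * q = 0 by rewrite /q mulrBr PP mulr1 subrr.
have qq : q * q = q by rewrite {1}/q mulrBl mul1r Pq subr0.
have hPDP : P * D q * P = 0.
  rewrite -{1}qq DM mulrDr mulrDl -!mulrA qP !mulr0 add0r !mulrA Pq !mul0r //.
rewrite !DM.
rewrite mulrDr mulrDl.
have -> : q * ((D q * b + q * D b) * q) * P = 0 by rewrite -!mulrA qP !mulr0.
rewrite add0r !mulrA qq.
have -> : q * b * q * D q * P = q * b * (q * D q * P) by rewrite !mulrA.
have -> : q * b * D q * P = q * b * (D q * P) by rewrite !mulrA.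
have -> : q * D q * P = D q * P.
  have : (q + P) * D q * P = D q * P by rewrite /q subrK mul1r.
  by rewrite mulrDl mulrDl hPDP addr0.
by [].
Qed.

Section A.
Variable R : realType.
Local Notation C := (R[i]).
Definition ad m l (A : 'M[C]_(m,l)) : 'M[C]_(l,m) := (map_mx Num.conj A)^T.
Arguments ad {m l} A.

Lemma adM m l r (A : 'M[C]_(m,l)) (B : 'M[C]_(l,r)) : ad (A *m B) = ad B *m ad A.
Proof. by rewrite /ad map_mxM trmx_mul. Qed.
Lemma adK m l (A : 'M[C]_(m,l)) : ad (ad A) = A.
Proof. by apply/matrixP=> i j; rewrite /ad !mxE conjCK. Qed.
Lemma adD m l (A B : 'M[C]_(m,l)) : ad (A + B) = ad A + ad B.
Proof. by apply/matrixP=> i j; rewrite /ad !mxE rmorphD. Qed.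
Lemma adN m l (A : 'M[C]_(m,l)) : ad (- A) = - ad A.
Proof. by apply/matrixP=> i j; rewrite /ad !mxE rmorphN. Qed.
Lemma adZ m l c (A : 'M[C]_(m,l)) : ad (c *: A) = c^* *: ad A.
Proof. by apply/matrixP=> i j; rewrite /ad !mxE rmorphM. Qed.
Lemma ad1 k : ad (1%:M : 'M[C]_k) = 1%:M.
Proof. by rewrite /ad map_mx1 trmx1. Qed.
Lemma ad0 m l : ad (0 : 'M[C]_(m,l)) = 0.
Proof. by apply/matrixP=> i j; rewrite /ad !mxE rmorph0. Qed.

Variable n : nat.
Local Notation N := n.+1.
Local Notation M := ('M[C]_N).

Lemma adjE (A : M) : adj A = ad A. Proof. by []. Qed.
Lemma adjMr (A B : M) : adj (A * B) = adj B * adj A.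
Proof. exact: adM. Qed.
Lemma adj1r : adj (1 : M) = 1. Proof. exact: ad1. Qed.
Lemma adjBr (A B : M) : adj (A - B) = adj A - adj B.
Proof. by rewrite !adjE adD adN. Qed.
Lemma adj0r : adj (0 : M) = 0. Proof. exact: ad0. Qed.

Definition sv (v : 'cV[C]_N) : C := (ad v *m v) 0 0.

Lemma sv_eq v : ad v *m v = (sv v)%:M.
Proof. exact: mx11_scalar. Qed.

Lemma sv_sum v : sv v = \sum_i `|v i 0| ^+ 2.
Proof. by rewrite /sv mxE; apply: eq_bigr => i _; rewrite /ad !mxE normCK mulrC. Qed.

Lemma sv_real v : (sv v)^* = sv v.
Proof. by rewrite geC0_conj // sv_sum sumr_ge0 // => i _; rewrite exprn_ge0. Qed.

Lemma sv_neq0 v : v != 0 -> sv v != 0.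
Proof.
move=> hv; apply/eqP => h0; move/eqP: hv; apply; apply/matrixP => i j.
rewrite ord1 mxE; apply/eqP; rewrite -normr_eq0 -sqrf_eq0; apply/eqP.
move: h0; rewrite sv_sum => h0.
by apply: (psumr_eq0P _ h0) => // k _; rewrite exprn_ge0.
Qed.

Lemma lin_ent m l (L : 'M[C]_(m,N)) (Rr : 'M[C]_(N,l)) i k :
  lin_functional (fun z : M => (L *m z *m Rr) i k).
Proof.
move=> c a b /=; rewrite mulmxDr mulmxDl -scalemxAr -scalemxAl.
by rewrite !mxE.
Qed.

Lemma min_proj_rep (P : M) : minimal_projection P ->
  exists v : 'cV[C]_N, sv v != 0 /\ P = (sv v)^-1 *: (v *m ad v).
Proof.
move=> [[adjP PP] [P0 hmin]].
have [[i k] /= hik | hnone] := pickP (fun ik : 'I_N * 'I_N => P ik.1 ik.2 != 0).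
  pose v := col k P.
  have v0 : v != 0.
    apply/eqP => hv; move/eqP: hik; apply; have := congr1 (fun A : 'cV[C]_N => A i 0) hv.
    by rewrite /v !mxE.
  have Pv : P *m v = v by rewrite /v !colE mulmxA; congr (_ *m _).
  have s0 := @sv_neq0 v v0.
  exists v; split => //.
  pose Q := (sv v)^-1 *: (v *m ad v).
  have Qv : Q *m v = v.
    by rewrite /Q -scalemxAl -mulmxA sv_eq mul_mx_scalar scalerA mulVf // scale1r.
  have Qpr : projection Q.
    split.
      rewrite adjE /Q adZ adM adK; congr (_ *: _); rewrite fmorphV; congr (_^-1); exact: sv_real.
    change (Q *m Q = Q).
    have vQ : ad v *m Q = ad v.
      by rewrite /Q -scalemxAr mulmxA sv_eq mul_scalar_mx scalerA mulVf // scale1r.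
    by rewrite {1}/Q -scalemxAl -mulmxA vQ.
  have QP : Q * P = Q.
    change (Q *m P = Q); rewrite /Q -scalemxAl -mulmxA.
    have -> : ad v *m P = ad v by rewrite -{1}adjP adjE -adM Pv.
    by [].
  case: (hmin Q Qpr QP) => [hQ|hQ]; last by rewrite -hQ.
  by move: v0; rewrite -Qv hQ mul0mx eqxx.
move: P0; suff -> : P = 0 by rewrite eqxx.
apply/matrixP => i j; have := hnone (i, j); rewrite /= mxE => /negbFE/eqP //.
Qed.

End A.
Arguments ad {R m l} A.
Arguments sv {R n} v.
Arguments adM {R m l r} A B.
Arguments adK {R m l} A.
Arguments adD {R m l} A B.
Arguments adN {R m l} A.
Arguments adZ {R m l} c A.
Arguments ad1 {R k}.
Arguments ad0 {R m l}.
Arguments adjE {R n} A.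
Arguments adjMr {R n} A B.
Arguments adj1r {R n}.
Arguments adjBr {R n} A B.
Arguments adj0r {R n}.
Arguments sv_eq {R n} v.
Arguments sv_sum {R n} v.
Arguments sv_real {R n} v.
Arguments sv_neq0 {R n} v _.
Arguments lin_ent {R n m l} L Rr i k.
Arguments min_proj_rep {R n} P _.

Section B.
Variable R : realType.
Local Notation C := (R[i]).
Variable n : nat.
Local Notation N := n.+1.
Local Notation M := ('M[C]_N).
Variable Delta : M -> M.
Hypothesis hw : weak_2_local_derivation Delta.

Lemma der_basic (D : M -> M) : is_derivation D ->
  D 0 = 0 /\ (forall c a, D (c *: a) = c *: D a).
Proof.
move=> [DL DM].
have D0 : D 0 = 0.
  have := DL 1 0 0; rewrite !scale1r addr0 => h.
  by have := congr1 (fun t => t - D 0) h; rewrite addrK subrr => <-.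
by split => // c a; have := DL c a 0; rewrite addr0 D0 addr0.
Qed.

Lemma mmA3 m (A : 'M[C]_(m,N)) (X Y : M) : A *m (X * Y) = (A *m X) *m Y.
Proof. exact: mulmxA. Qed.
Lemma mmE (X Y : M) : X *m Y = X * Y. Proof. by []. Qed.

Lemma key5 (P : M) (PP : P * P = P) (A : 'M[C]_(1,N)) (b y0 : M) :
  A *m ((1 - P) * b * (1 - P)) = A *m ((1 - P) * y0 * (1 - P)) ->
  A *m ((1 - P) * Delta ((1 - P) * b * (1 - P)) * P)
  = A *m ((1 - P) * Delta ((1 - P) * y0 * (1 - P)) * P).
Proof.
move=> hA; apply/matrixP => i k.
have lin := lin_ent (A *m (1 - P)) P i k.
case: (hw ((1 - P) * b * (1 - P)) ((1 - P) * y0 * (1 - P)) _ lin) => D [[DL DM] [e1 e2]].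
pose phi z := (A *m (1 - P) *m z *m P) i k.
have h1 z : (A *m ((1 - P) * z * P)) i k = phi z by rewrite /phi !mmA3.
have h2 z : phi (D ((1 - P) * z * (1 - P)))
    = (A *m ((1 - P) * z * (1 - P)) *m (D (1 - P) * P)) i k.
  by rewrite -h1 der_qP // !mmA3.
transitivity (phi (Delta ((1 - P) * b * (1 - P)))); first exact: h1.
transitivity (phi (Delta ((1 - P) * y0 * (1 - P)))); last exact: (esym (h1 _)).
apply: (etrans e1); apply: (etrans _ (esym e2)).
change (phi (D ((1 - P) * b * (1 - P))) = phi (D ((1 - P) * y0 * (1 - P)))).
rewrite !h2 hA.
done.
Qed.

Variable p : 'I_N -> M.
Hypothesis hmin : forall j, minimal_projection (p j).
Hypothesis horth : forall j l, j != l -> p j * p l = 0.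
Hypothesis hD0 : forall j, Delta (p j) = 0.
Variable v : 'I_N -> 'cV[C]_N.
Hypothesis hv : forall j, sv (v j) != 0 /\ p j = (sv (v j))^-1 *: (v j *m ad (v j)).

Lemma ppj j : p j * p j = p j.
Proof. by case: (hmin j) => [[_ ->]]. Qed.

Lemma pv j : p j *m v j = v j.
Proof.
case: (hv j) => s0 ->.
by rewrite -scalemxAl -mulmxA sv_eq mul_mx_scalar scalerA mulVf // scale1r.
Qed.

Lemma vp j : ad (v j) *m p j = ad (v j).
Proof.
case: (hv j) => s0 ->.
by rewrite -scalemxAr mulmxA sv_eq mul_scalar_mx scalerA mulVf // scale1r.
Qed.

Lemma ortho j l : j != l -> ad (v j) *m v l = 0.
Proof.
move=> hjl; rewrite -(vp j) -(pv l) mulmxA -(mulmxA _ (p j)) mmE horth //.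
by rewrite mulmx0 mul0mx.
Qed.

Lemma sumP : \sum_j p j = 1.
Proof.
pose V : M := \matrix_(i, k) v k i 0.
pose L : M := \matrix_(k, i) ((sv (v k))^-1 * (v k i 0)^*).
have LV : L *m V = 1%:M.
  apply/matrixP => j k; rewrite !mxE.
  have -> : \sum_i L j i * V i k = (sv (v j))^-1 * (ad (v j) *m v k) 0 0.
    rewrite [X in _ = _ * X]mxE mulr_sumr; apply: eq_bigr => i _.
    by rewrite /L /V /ad !mxE mulrA.
  case: eqP => [<-|/eqP hjk]; first by rewrite -/(sv (v j)) mulVf //; case: (hv j).
  by rewrite ortho // mxE mulr0.
have VL := mulmx1C LV.
rewrite -[RHS]VL; apply/matrixP => i l; rewrite summxE !mxE.
apply: eq_bigr => k _; case: (hv k) => _ ->.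
by rewrite /L /V /ad !mxE big_ord1 !mxE mulrCA.
Qed.

Lemma Delta_diag (y : M) (c : 'I_N -> C) :
  (forall b, y * p b = c b *: p b) -> (forall a, p a * y = c a *: p a) -> Delta y = 0.
Proof.
move=> yp py.
have E a b : p a * Delta y * p b = 0.
  apply/matrixP => i k; rewrite [RHS]mxE.
  case: (hw y (p b) _ (lin_ent (p a) (p b) i k)) => D [hD [e1 e2]].
  have [D0 DZ] := der_basic _ hD; case: hD => DL DM.
  change ((p a *m Delta y *m p b) i k = 0); rewrite e1.
  have h1 : D y * p b = c b *: D (p b) - y * D (p b).
    by rewrite -DZ -yp DM addrK.
  have h2 : p a * D y * p b = (c b - c a) *: (p a * D (p b) * p b).
    rewrite -{1}(ppj b) !mulrA -(mulrA _ (D y)) h1 mulrBr mulrBl mulrA py.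
    by rewrite -scalerAr -!scalerAl scalerBl.
  change ((p a * D y * p b) i k = 0); rewrite h2 mxE.
  change ((c b - c a) * (p a *m D (p b) *m p b) i k = 0); rewrite -e2 hD0.
  by rewrite mulmx0 mul0mx mxE mulr0.
rewrite -[Delta y]mul1r -[Delta y]mulr1 -sumP mulr_suml big1 // => a _.
by rewrite mulr_sumr mulr_sumr big1 // => b _; rewrite mulrA E.
Qed.
Local Notation P := (p ord_max).
Local Notation q := (1 - p ord_max).

Lemma rowZ (a : M) (u : 'rV[C]_N) : (forall j, (u *m v j) 0 0 != 0) ->
  u *m (q * Delta (q * a * q) * P) = 0.
Proof.
move=> hu.
have PP : P * P = P := ppj ord_max.
have qP : q * P = 0 by rewrite mulrBl mul1r PP subrr.
pose c j := (u *m (q * a * q) *m v j) 0 0 / (u *m v j) 0 0.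
pose y : M := \sum_j c j *: p j.
have yp b : y * p b = c b *: p b.
  rewrite /y mulr_suml (bigD1 b) //= big1 ?addr0 => [|j hj]; first by rewrite -scalerAl ppj.
  by rewrite -scalerAl horth ?scaler0.
have py a0 : p a0 * y = c a0 *: p a0.
  rewrite /y mulr_sumr (bigD1 a0) //= big1 ?addr0 => [|j hj]; first by rewrite -scalerAr ppj.
  by rewrite -scalerAr horth ?scaler0 // eq_sym.
have Dy : Delta y = 0 := @Delta_diag y c yp py.
have xP : q * a * q * P = 0 by rewrite -mulrA qP mulr0.
have cmax : c ord_max = 0.
  have : u *m (q * a * q) *m v ord_max = 0.
    by rewrite -(pv ord_max) mulmxA -(mulmxA u) mmE xP mulmx0 mul0mx.
  by rewrite /c => ->; rewrite mxE mul0r.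
have Py : P * y = 0 by rewrite py cmax scale0r.
have yP : y * P = 0 by rewrite yp cmax scale0r.
have yq : q * y * q = y by rewrite mulrBl mul1r Py subr0 mulrBr mulr1 yP subr0.
have ux : u *m (q * a * q) = u *m y.
  have -> : u *m (q * a * q) = u *m (q * a * q) *m \sum_j p j by rewrite sumP mulmx1.
  rewrite /y !mulmx_sumr; apply: eq_bigr => j _.
  case: (hv j) => s0 ->.
  rewrite -!scalemxAr (mulmxA (u *m (q * a * q))) (mulmxA u (v j)).
  rewrite (mx11_scalar (u *m (q * a * q) *m v j)).
  rewrite (mx11_scalar (u *m v j)) !mul_scalar_mx !scalerA; congr (_ *: _).
  by rewrite [RHS]mulrAC /c divfK // mulrC.
have h5 := @key5 P PP u a y.
have hA : u *m (q * a * q) = u *m (q * y * q) by rewrite yq.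
by rewrite (h5 hA) yq Dy mulr0 mul0r mulmx0.
Qed.

Lemma main1 (a : M) : q * Delta (q * a * q) * P = 0.
Proof.
move: (rowZ a); move: (q * Delta (q * a * q) * P) => Z hZ.
pose w := \sum_j ad (v j).
have wv k : (w *m v k) 0 0 = sv (v k).
  rewrite /w mulmx_suml (bigD1 k) //= big1 ?addr0 => [|j hj]; first by [].
  exact: ortho.
have h0 k : (w *m v k) 0 0 != 0 by rewrite wv; case: (hv k).
have h1 j k : ((w + ad (v j)) *m v k) 0 0 != 0.
  rewrite mulmxDl mxE wv; case: (eqVneq j k) => [<-|hjk].
    by rewrite -/(sv (v j)) -mulr2n mulrn_eq0 /=; case: (hv j).
  by rewrite ortho // mxE addr0; case: (hv k).
have hj j : ad (v j) *m Z = 0.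
  by have := hZ _ (h1 j); rewrite mulmxDl (hZ w h0) add0r.
rewrite -[Z]mul1r -sumP mulr_suml big1 // => j _.
case: (hv j) => _ ->.
by rewrite -mmE -scalemxAl -mulmxA hj mulmx0 scaler0.
Qed.
End B.

(* M_{n+1}(C), projections p_1..p_{n+1} indexed by 'I_n.+1, p_{n+1} = p ord_max *)
Theorem lemma2p2 (R : realType) (n : nat) (Delta : 'M[R[i]]_n.+1 -> 'M[R[i]]_n.+1)
  (p : 'I_n.+1 -> 'M[R[i]]_n.+1) :
  weak_2_local_derivation Delta ->
  symmetric_map Delta ->
  (forall j, minimal_projection (p j)) ->
  (forall j l, j != l -> p j * p l = 0) ->
  (forall j, Delta (p j) = 0) ->
  forall a : 'M[R[i]]_n.+1,
    let q := 1 - p ord_max in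
    q * Delta (q * a * q) * p ord_max = 0 /\ p ord_max * Delta (q * a * q) * q = 0.
Proof.
move=> hw hsym hmin horth hD0 a q.
have [v hv] : exists v : 'I_n.+1 -> 'cV[R[i]]_n.+1,
    forall j, sv (v j) != 0 /\ p j = (sv (v j))^-1 *: (v j *m ad (v j)).
  apply: (@fin_all_exists _ (fun _ => 'cV[R[i]]_n.+1)
     (fun j w => sv w != 0 /\ p j = (sv w)^-1 *: (w *m ad w))) => j.
  exact: min_proj_rep (hmin j).
have M1 := @main1 R n Delta hw p hmin horth hD0 v hv.
split; first exact: M1.
have adjP : adj (p ord_max) = p ord_max by case: (hmin ord_max) => [[]].
have adjq : adj q = q by rewrite /q adjBr adj1r adjP.
have ax : adj (q * a * q) = q * adj a * q by rewrite !adjMr adjq mulrA.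
rewrite -(hsym (q * a * q)) ax.
have := M1 (adj a) => /(congr1 (@adj _ _)).
rewrite adj0r !adjMr adjP -/q adjq mulrA => h; exact: h.
Qed.
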